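(* Let $A$ be a finite type $k$-algebra (not necessarily unital) and let $n$ be a positive integer. Then $A$ and $\mathrm{M}_n(A)$ are stratified equivalent.
   Context: $k=\mathcal{O}(X)$ is the coordinate algebra of a complex affine variety $X$. A $k$-algebra is a (not necessarily unital or commutative) $\mathbb{C}$-algebra $A$ which is a unital left $k$-module with $\lambda(\omega a)=\omega(\lambda a)=(\lambda\omega)a$ and $\omega(a_1a_2)=(\omega a_1)a_2=a_1(\omega a_2)$; morphisms are $k$-linear algebra morphisms; finite type means finitely generated as a $k$-module. $\mathrm{M}_n(A)$ is the $k$-algebra of $n\times n$ matrices over $A$ with $k$ acting entrywise. Representations carry an $A$-action and a unital $k$-action with $(\omega a)v=\omega(av)=a(\omega v)$; irreducible means $AV\neq0$ and no subspace $0\neq U\neq V$ stable under $A$ and $k$. $\mathrm{Prim}(A)$ is the set of kernels of irreducible representations; a $k$-ideal is an ideal stable under $k$. Stratified equivalence: a morphism $f\colon A\to B$ of finite type $k$-algebras is spectrum preserving if for each primitive ideal $J\subset B$ there is a unique primitive ideal $I\subset A$ with $I\supset f^{-1}(J)$, and the resulting map $\mathrm{Prim}(B)\to\mathrm{Prim}(A)$ is a bijection; it is spectrum preserving with respect to filtrations if there are $k$-ideals $0=I_0\subset\cdots\subset I_r=A$ and $0=J_0\subset\cdots\subset J_r=B$ with $f(I_j)\subset J_j$ and each $I_j/I_{j-1}\to J_j/J_{j-1}$ spectrum preserving. An algebraic variation of $k$-structure is a unital $\mathbb{C}$-algebra $A$ with a unital morphism $\Psi\colon k\to Z(A[t,t^{-1}])$,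 giving $k$-algebras $A_\zeta$ ($\zeta\in\mathbb{C}^\times$) with $k$ acting via $ev(\zeta)\circ\Psi$, $ev(\zeta)(\sum a_jt^j)=\sum a_j\zeta^j$. Stratified equivalence is the equivalence relation on finite type $k$-algebras generated by: $A\sim B$ whenever there is a morphism $A\to B$ spectrum preserving with respect to filtrations; and $A_\zeta\sim A_\eta$ for all $\zeta,\eta\in\mathbb{C}^\times$ whenever $\{A_\zeta\}$ is an algebraic variation of $k$-structure with every $A_\zeta$ a unital finite type $k$-algebra. *)

(* Defs.v *)
From HB Require Import structures.
From mathcomp Require Import all_boot all_order all_algebra.
From mathcomp Require Import complex Rstruct.
Set Implicit Arguments. Unset Strict Implicit. Unset Printing Implicit Defensive.
Import Order.TTheory GRing.Theory Num.Theory.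
Local Open Scope ring_scope.

Definition CC : numClosedFieldType := (Rdefinitions.R)[i].

(** * k = O(X): a finitely generated reduced commutative unital C-algebra *)
Inductive gen_by (k : comAlgType CC) (s : seq k) : k -> Prop :=
  | gen_gen x : x \in s -> gen_by s x
  | gen_const (c : CC) : gen_by s (c%:A)
  | gen_add x y : gen_by s x -> gen_by s y -> gen_by s (x + y)
  | gen_mul x y : gen_by s x -> gen_by s y -> gen_by s (x * y).

Definition coord_alg (k : comAlgType CC) : Prop :=
  (exists s : seq k, forall x, gen_by s x) /\
  (forall (x : k) (m : nat), x ^+ m = 0 -> x = 0).

Section KAlg.
Variable k : comAlgType CC.

Record kraw := KRaw {
  car : zmodType;
  cscale : CC -> car -> car;
  kmul : car -> car -> car;
  kact : k -> car -> car
}.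
Arguments cscale : clear implicits.
Arguments kmul : clear implicits.
Arguments kact : clear implicits.

Definition is_kalg (A : kraw) : Prop :=
  (forall a, cscale A 1 a = a) /\
  (forall l m a, cscale A (l * m) a = cscale A l (cscale A m a)) /\
  (forall l m a, cscale A (l + m) a = cscale A l a + cscale A m a) /\
  (forall l a b, cscale A l (a + b) = cscale A l a + cscale A l b) /\
  (forall a b c, kmul A (kmul A a b) c = kmul A a (kmul A b c)) /\
  (forall a b c, kmul A (a + b) c = kmul A a c + kmul A b c) /\
  (forall a b c, kmul A a (b + c) = kmul A a b + kmul A a c) /\
  (forall l a b, kmul A (cscale A l a) b = cscale A l (kmul A a b)) /\
  (forall l a b, kmul A a (cscale A l b) = cscale A l (kmul A a b)) /\
  (forall a, kact A 1 a = a) /\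
  (forall w1 w2 a, kact A (w1 * w2) a = kact A w1 (kact A w2 a)) /\
  (forall w1 w2 a, kact A (w1 + w2) a = kact A w1 a + kact A w2 a) /\
  (forall w a b, kact A w (a + b) = kact A w a + kact A w b) /\
  (forall l w a, cscale A l (kact A w a) = kact A w (cscale A l a) /\
                 kact A w (cscale A l a) = kact A (l *: w) a) /\
  (forall w a b, kact A w (kmul A a b) = kmul A (kact A w a) b /\
                 kmul A (kact A w a) b = kmul A a (kact A w b)).

Definition finite_type (A : kraw) : Prop :=
  exists (m : nat) (s : 'I_m -> car A),
    forall a, exists w : 'I_m -> k, a = \sum_(i < m) kact A (w i) (s i).

Definition ft_kalg (A : kraw) : Prop := is_kalg A /\ finite_type A.

Definition unital (A : kraw) : Prop :=
  exists e, forall a, kmul A e a = a /\ kmul A a e = a.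

Definition kmorph (A B : kraw) (f : car A -> car B) : Prop :=
  (forall a b, f (a + b) = f a + f b) /\
  (forall l a, f (cscale A l a) = cscale B l (f a)) /\
  (forall a b, f (kmul A a b) = kmul B (f a) (f b)) /\
  (forall w a, f (kact A w a) = kact B w (f a)).

Definition same_set (T : Type) (P Q : T -> Prop) := forall x, P x <-> Q x.
Definition sub_set (T : Type) (P Q : T -> Prop) := forall x, P x -> Q x.
Definition full_set (T : Type) : T -> Prop := fun _ => True.
Definition zero_set (T : zmodType) : T -> Prop := fun x => x = 0.

Definition kideal (A : kraw) (I : car A -> Prop) : Prop :=
  I 0 /\ (forall a b, I a -> I b -> I (a + b)) /\ (forall a, I a -> I (- a)) /\
  (forall l a, I a -> I (cscale A l a)) /\
  (forall a b, I b -> I (kmul A a b)) /\ (forall a b, I a -> I (kmul A a b)) /\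
  (forall w a, I a -> I (kact A w a)).

(** * Representations of the subquotient k-algebra I/J (J ⊆ I k-ideals of A).
    Elements of I/J are represented by elements of I; a representation of
    I/J is an action of the elements of I which kills J.  For I = A and
    J = 0 this is literally a representation of A. *)
Definition is_rep (A : kraw) (I J : car A -> Prop) (V : zmodType)
    (vscale : CC -> V -> V) (act : car A -> V -> V) (kv : k -> V -> V) : Prop :=
  (forall v, vscale 1 v = v) /\
  (forall l m v, vscale (l * m) v = vscale l (vscale m v)) /\
  (forall l m v, vscale (l + m) v = vscale l v + vscale m v) /\
  (forall l v w, vscale l (v + w) = vscale l v + vscale l w) /\
  (forall v, kv 1 v = v) /\
  (forall w1 w2 v, kv (w1 * w2) v = kv w1 (kv w2 v)) /\
  (forall w1 w2 v, kv (w1 + w2) v = kv w1 v + kv w2 v) /\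
  (forall w v u, kv w (v + u) = kv w v + kv w u) /\
  (forall l w v, vscale l (kv w v) = kv w (vscale l v) /\
                 kv w (vscale l v) = kv (l *: w) v) /\
  (forall a b v, I a -> I b -> act (a + b) v = act a v + act b v) /\
  (forall a v u, I a -> act a (v + u) = act a v + act a u) /\
  (forall l a v, I a -> act (cscale A l a) v = vscale l (act a v)) /\
  (forall l a v, I a -> act a (vscale l v) = vscale l (act a v)) /\
  (forall a b v, I a -> I b -> act (kmul A a b) v = act a (act b v)) /\
  (forall w a v, I a -> act (kact A w a) v = kv w (act a v) /\
                        kv w (act a v) = act a (kv w v)) /\
  (forall a v, J a -> act a v = 0).

Definition is_irred_rep (A : kraw) (I J : car A -> Prop) (V : zmodType)
    (vscale : CC -> V -> V) (act : car A -> V -> V) (kv : k -> V -> V) : Prop :=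
  is_rep I J vscale act kv /\
  (exists a v, I a /\ act a v <> 0) /\
  (forall U : V -> Prop,
     U 0 -> (forall v u, U v -> U u -> U (v + u)) ->
     (forall l v, U v -> U (vscale l v)) ->
     (forall w v, U v -> U (kv w v)) ->
     (forall a v, I a -> U v -> U (act a v)) ->
     (forall v, U v -> v = 0) \/ (forall v, U v)).

(** P is a primitive ideal of I/J (represented by its preimage in I). *)
Definition prim_sq (A : kraw) (I J : car A -> Prop) (P : car A -> Prop) : Prop :=
  exists (V : zmodType) (vscale : CC -> V -> V) (act : car A -> V -> V)
         (kv : k -> V -> V),
    is_irred_rep I J vscale act kv /\
    same_set P (fun a => I a /\ forall v, act a v = 0).

Definition prim (A : kraw) (P : car A -> Prop) : Prop :=
  prim_sq (@full_set (car A)) (@zero_set (car A)) P.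

Definition spec_pres_sq (A B : kraw) (f : car A -> car B)
    (IA JA : car A -> Prop) (IB JB : car B -> Prop) : Prop :=
  let pre (P : car B -> Prop) := fun a => IA a /\ P (f a) in
  (forall P, prim_sq IB JB P ->
     exists Q, prim_sq IA JA Q /\ sub_set (pre P) Q /\
       forall Q', prim_sq IA JA Q' -> sub_set (pre P) Q' -> same_set Q Q') /\
  (forall P1 P2 Q, prim_sq IB JB P1 -> prim_sq IB JB P2 -> prim_sq IA JA Q ->
     sub_set (pre P1) Q -> sub_set (pre P2) Q -> same_set P1 P2) /\
  (forall Q, prim_sq IA JA Q -> exists P, prim_sq IB JB P /\ sub_set (pre P) Q).

Definition spec_pres (A B : kraw) (f : car A -> car B) : Prop :=
  spec_pres_sq f (@full_set (car A)) (@zero_set (car A))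
                 (@full_set (car B)) (@zero_set (car B)).

Definition spec_pres_filt (A B : kraw) (f : car A -> car B) : Prop :=
  exists (r : nat) (I : nat -> car A -> Prop) (J : nat -> car B -> Prop),
    same_set (I 0%N) (@zero_set (car A)) /\ same_set (I r) (@full_set (car A)) /\
    same_set (J 0%N) (@zero_set (car B)) /\ same_set (J r) (@full_set (car B)) /\
    (forall j, (j <= r)%N -> kideal (I j) /\ kideal (J j)) /\
    (forall j, (0 < j <= r)%N -> sub_set (I j.-1) (I j) /\ sub_set (J j.-1) (J j)) /\
    (forall j a, (j <= r)%N -> I j a -> J j (f a)) /\
    (forall j, (0 < j <= r)%N -> spec_pres_sq f (I j) (I j.-1) (J j) (J j.-1)).

(** A Laurent polynomial (n, s) in A[t,t^-1] stands for sum_i s_i t^(i - n). *)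
Definition laurent (A : algType CC) := (nat * seq A)%type.

Definition lcoef (A : algType CC) (x : laurent A) (j : int) : A :=
  match (j + (x.1)%:Z)%R with
  | Posz m => nth 0 x.2 m
  | Negz _ => 0
  end.

Definition lmul (A : algType CC) (x y : laurent A) : laurent A :=
  ((x.1 + y.1)%N,
   [seq \sum_(i < l.+1) nth 0 x.2 i * nth 0 y.2 (l - i)%N
      | l <- iota 0 (size x.2 + size y.2)]).

Definition lev (A : algType CC) (z : CC) (x : laurent A) : A :=
  \sum_(i < size x.2) (z ^ ((i%:Z) - (x.1)%:Z)%R) *: nth 0 x.2 i.

Definition is_variation (A : algType CC) (Psi : k -> laurent A) : Prop :=
  (forall w1 w2 j, lcoef (Psi (w1 + w2)) j = lcoef (Psi w1) j + lcoef (Psi w2) j) /\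
  (forall l w j, lcoef (Psi (l *: w)) j = l *: lcoef (Psi w) j) /\
  (forall w1 w2 j, lcoef (Psi (w1 * w2)) j = lcoef (lmul (Psi w1) (Psi w2)) j) /\
  (forall j, lcoef (Psi 1) j = if j == 0 then 1 else 0) /\
  (forall w (x : laurent A) j, lcoef (lmul (Psi w) x) j = lcoef (lmul x (Psi w)) j).

Definition var_alg (A : algType CC) (Psi : k -> laurent A) (z : CC) : kraw :=
  @KRaw (A : zmodType) (fun l a => l *: a) (fun a b => a * b)
        (fun w a => lev z (Psi w) * a).

Inductive strat_eq : kraw -> kraw -> Prop :=
  | se_refl A : ft_kalg A -> strat_eq A A
  | se_sym A B : strat_eq A B -> strat_eq B A
  | se_trans A B C : strat_eq A B -> strat_eq B C -> strat_eq A C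
  | se_spec A B (f : car A -> car B) :
      ft_kalg A -> ft_kalg B -> kmorph f -> spec_pres_filt f -> strat_eq A B
  | se_var (A : algType CC) (Psi : k -> laurent A) :
      is_variation Psi ->
      (forall z : CC, z != 0 -> ft_kalg (var_alg Psi z) /\ unital (var_alg Psi z)) ->
      forall z e : CC, z != 0 -> e != 0 -> strat_eq (var_alg Psi z) (var_alg Psi e).

Definition Mn (A : kraw) (n : nat) : kraw :=
  @KRaw ('M[car A]_n : zmodType)
        (fun l M => map_mx (cscale A l) M)
        (fun M N => \matrix_(i, j) \sum_(l < n) kmul A (M i l) (N l j))
        (fun w M => map_mx (kact A w) M).

End KAlg.

(* Main.v *)
Require Import Defs.
From HB Require Import structures.
From mathcomp Require Import all_boot all_order all_algebra.
Set Implicit Arguments. Unset Strict Implicit. Unset Printing Implicit Defensive.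
Import GRing.Theory.
Local Open Scope ring_scope.

Lemma sum_morph (V W : zmodType) (f : V -> W) :
  (forall x y, f (x + y) = f x + f y) ->
  forall (I : Type) (r : seq I) (P : pred I) (F : I -> V),
    f (\sum_(i <- r | P i) F i) = \sum_(i <- r | P i) f (F i).
Proof.
move=> fD I r P F.
have f0 : f 0 = 0.
  by apply/eqP; rewrite -(subrr (f 0)) -{2}(addr0 0) fD addrK.
exact: (big_morph f fD f0).
Qed.

Lemma add_morph0 (V W : zmodType) (f : V -> W) :
  (forall x y, f (x + y) = f x + f y) -> f 0 = 0.
Proof. by move=> fD; apply/eqP; rewrite -(subrr (f 0)) -{2}(addr0 0) fD addrK. Qed.

Lemma add_morphN (V W : zmodType) (f : V -> W) :
  (forall x y, f (x + y) = f x + f y) -> forall x, f (- x) = - f x.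
Proof.
move=> fD x; apply/eqP; rewrite -subr_eq0 opprK -fD addNr.
by rewrite (add_morph0 fD).
Qed.

Section Basic.
Variable k : comAlgType CC.
Variable X : kraw k.
Hypothesis HX : is_kalg X.

Notation cs := (@cscale k X).
Notation km := (@kmul k X).
Notation ka := (@kact k X).

Ltac dk H := case: H => [h1 [h2 [h3 [h4 [h5 [h6 [h7 [h8 [h9 [h10 [h11 [h12 [h13 [h14 h15]]]]]]]]]]]]]].

Lemma cs1 a : cs 1 a = a. Proof. by dk HX. Qed.
Lemma csM l m a : cs (l * m) a = cs l (cs m a). Proof. by dk HX. Qed.
Lemma csDl l m a : cs (l + m) a = cs l a + cs m a. Proof. by dk HX. Qed.
Lemma csDr l a b : cs l (a + b) = cs l a + cs l b. Proof. by dk HX. Qed.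
Lemma kmA a b c : km (km a b) c = km a (km b c). Proof. by dk HX. Qed.
Lemma kmDl a b c : km (a + b) c = km a c + km b c. Proof. by dk HX. Qed.
Lemma kmDr a b c : km a (b + c) = km a b + km a c. Proof. by dk HX. Qed.
Lemma kmZl l a b : km (cs l a) b = cs l (km a b). Proof. by dk HX. Qed.
Lemma kmZr l a b : km a (cs l b) = cs l (km a b). Proof. by dk HX. Qed.
Lemma ka1 a : ka 1 a = a. Proof. by dk HX. Qed.
Lemma kaM w1 w2 a : ka (w1 * w2) a = ka w1 (ka w2 a). Proof. by dk HX. Qed.
Lemma kaDl w1 w2 a : ka (w1 + w2) a = ka w1 a + ka w2 a. Proof. by dk HX. Qed.
Lemma kaDr w a b : ka w (a + b) = ka w a + ka w b. Proof. by dk HX. Qed.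
Lemma cska l w a : cs l (ka w a) = ka w (cs l a). Proof. by dk HX; case: (h14 l w a). Qed.
Lemma kacs l w a : ka w (cs l a) = ka (l *: w) a. Proof. by dk HX; case: (h14 l w a). Qed.
Lemma kakml w a b : ka w (km a b) = km (ka w a) b. Proof. by dk HX; case: (h15 w a b). Qed.
Lemma kakmr w a b : ka w (km a b) = km a (ka w b). Proof. by dk HX; case: (h15 w a b) => -> ->. Qed.

Lemma km0l b : km 0 b = 0. Proof. exact: (add_morph0 (fun x y => kmDl x y b)). Qed.
Lemma km0r a : km a 0 = 0. Proof. exact: (add_morph0 (kmDr a)). Qed.
Lemma kmNl a b : km (- a) b = - km a b. Proof. exact: (add_morphN (fun x y => kmDl x y b)). Qed.
Lemma kmNr a b : km a (- b) = - km a b. Proof. exact: (add_morphN (kmDr a)). Qed.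
Lemma kmBl a b c : km (a - b) c = km a c - km b c. Proof. by rewrite kmDl kmNl. Qed.
Lemma kmBr a b c : km a (b - c) = km a b - km a c. Proof. by rewrite kmDr kmNr. Qed.
Lemma cs0 l : cs l 0 = 0. Proof. exact: (add_morph0 (csDr l)). Qed.
Lemma csN l a : cs l (- a) = - cs l a. Proof. exact: (add_morphN (csDr l)). Qed.
Lemma ka0 w : ka w 0 = 0. Proof. exact: (add_morph0 (kaDr w)). Qed.
Lemma kaN w a : ka w (- a) = - ka w a. Proof. exact: (add_morphN (kaDr w)). Qed.
Lemma csB l a b : cs l (a - b) = cs l a - cs l b. Proof. by rewrite csDr csN. Qed.
Lemma kaB w a b : ka w (a - b) = ka w a - ka w b. Proof. by rewrite kaDr kaN. Qed.

Lemma km_suml I r P (F : I -> car X) b :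
  km (\sum_(i <- r | P i) F i) b = \sum_(i <- r | P i) km (F i) b.
Proof. exact: (sum_morph (fun x y => kmDl x y b)). Qed.
Lemma km_sumr I r P (F : I -> car X) a :
  km a (\sum_(i <- r | P i) F i) = \sum_(i <- r | P i) km a (F i).
Proof. exact: (sum_morph (kmDr a)). Qed.
Lemma cs_sum I r P (F : I -> car X) l :
  cs l (\sum_(i <- r | P i) F i) = \sum_(i <- r | P i) cs l (F i).
Proof. exact: (sum_morph (csDr l)). Qed.
Lemma ka_sum I r P (F : I -> car X) w :
  ka w (\sum_(i <- r | P i) F i) = \sum_(i <- r | P i) ka w (F i).
Proof. exact: (sum_morph (kaDr w)). Qed.

End Basic.
Section Rep.
Variable k : comAlgType CC.
Variable X : kraw k.
Variable V : zmodType.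
Variable vs : CC -> V -> V.
Variable act : car X -> V -> V.
Variable kv : k -> V -> V.
Hypothesis Hr : is_irred_rep (@full_set (car X)) (@zero_set (car X)) vs act kv.

Ltac dr H := case: H => [[r1 [r2 [r3 [r4 [r5 [r6 [r7 [r8 [r9 [r10 [r11 [r12 [r13 [r14 [r15 r16]]]]]]]]]]]]]]] [rnt rirr]].

Lemma vsDr l v w : vs l (v + w) = vs l v + vs l w. Proof. by dr Hr. Qed.
Lemma kvDr w v u : kv w (v + u) = kv w v + kv w u. Proof. by dr Hr. Qed.
Lemma vs1 v : vs 1 v = v. Proof. by dr Hr. Qed.
Lemma kv1 v : kv 1 v = v. Proof. by dr Hr. Qed.
Lemma vsM l m v : vs (l * m) v = vs l (vs m v). Proof. by dr Hr. Qed.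
Lemma vsDl l m v : vs (l + m) v = vs l v + vs m v. Proof. by dr Hr. Qed.
Lemma kvM w1 w2 v : kv (w1 * w2) v = kv w1 (kv w2 v). Proof. by dr Hr. Qed.
Lemma kvDl w1 w2 v : kv (w1 + w2) v = kv w1 v + kv w2 v. Proof. by dr Hr. Qed.
Lemma vskv l w v : vs l (kv w v) = kv w (vs l v). Proof. by dr Hr; case: (r9 l w v). Qed.
Lemma kvvs l w v : kv w (vs l v) = kv (l *: w) v. Proof. by dr Hr; case: (r9 l w v). Qed.
Lemma actDl a b v : act (a + b) v = act a v + act b v. Proof. by dr Hr; apply: r10. Qed.
Lemma actDr a v u : act a (v + u) = act a v + act a u. Proof. by dr Hr; apply: r11. Qed.
Lemma actcs l a v : act (cscale l a) v = vs l (act a v). Proof. by dr Hr; apply: r12. Qed.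
Lemma actvs l a v : act a (vs l v) = vs l (act a v). Proof. by dr Hr; apply: r13. Qed.
Lemma actkm a b v : act (kmul a b) v = act a (act b v). Proof. by dr Hr; apply: r14. Qed.
Lemma actka w a v : act (kact w a) v = kv w (act a v). Proof. by dr Hr; case: (r15 w a v). Qed.
Lemma actkv w a v : act a (kv w v) = kv w (act a v). Proof. by dr Hr; case: (r15 w a v). Qed.
Lemma nontriv : exists a v, act a v <> 0. Proof. by dr Hr; case: rnt => a [v [_ h]]; exists a, v. Qed.
Lemma irr (U : V -> Prop) :
  U 0 -> (forall v u, U v -> U u -> U (v + u)) ->
  (forall l v, U v -> U (vs l v)) -> (forall w v, U v -> U (kv w v)) ->
  (forall a v, U v -> U (act a v)) ->
  (forall v, U v -> v = 0) \/ (forall v, U v).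
Proof. by dr Hr => U0 UD Us Uk Ua; apply: rirr => // a v _; apply: Ua. Qed.

Lemma vs0 l : vs l 0 = 0. Proof. exact: (add_morph0 (vsDr l)). Qed.
Lemma kv0 w : kv w 0 = 0. Proof. exact: (add_morph0 (kvDr w)). Qed.
Lemma act0l v : act 0 v = 0. Proof. exact: (add_morph0 (fun a b => actDl a b v)). Qed.
Lemma act0r a : act a 0 = 0. Proof. exact: (add_morph0 (actDr a)). Qed.
Lemma actNl a v : act (- a) v = - act a v. Proof. exact: (add_morphN (fun a b => actDl a b v)). Qed.
Lemma actNr a v : act a (- v) = - act a v. Proof. exact: (add_morphN (actDr a)). Qed.
Lemma actBl a b v : act (a - b) v = act a v - act b v. Proof. by rewrite actDl actNl. Qed.
Lemma act_suml I r P (F : I -> car X) v :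
  act (\sum_(i <- r | P i) F i) v = \sum_(i <- r | P i) act (F i) v.
Proof. exact: (sum_morph (fun a b => actDl a b v)). Qed.
Lemma act_sumr I r P (F : I -> V) a :
  act a (\sum_(i <- r | P i) F i) = \sum_(i <- r | P i) act a (F i).
Proof. exact: (sum_morph (actDr a)). Qed.
Lemma kv_sum I r P (F : I -> V) w :
  kv w (\sum_(i <- r | P i) F i) = \sum_(i <- r | P i) kv w (F i).
Proof. exact: (sum_morph (kvDr w)). Qed.

Lemma ann_zero v : (forall a, act a v = 0) -> v = 0.
Proof.
move=> hv.
have := @irr (fun v => forall a, act a v = 0).
case.
- by move=> a; rewrite act0r.
- by move=> x y hx hy a; rewrite actDr hx hy addr0.
- by move=> l x hx a; rewrite actvs hx vs0.
- by move=> w x hx a; rewrite actkv hx kv0.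
- by move=> b x hx a; rewrite -actkm hx.
- by move=> h; apply: h.
- move=> hall; case: nontriv => a [x]; by rewrite hall.
Qed.

Lemma cyclic v0 : v0 <> 0 -> forall v, exists a, v = act a v0.
Proof.
move=> nz.
have := @irr (fun v => exists a, v = act a v0).
case.
- by exists 0; rewrite act0l.
- by move=> x y [a ->] [b ->]; exists (a + b); rewrite actDl.
- by move=> l x [a ->]; exists (cscale l a); rewrite actcs.
- by move=> w x [a ->]; exists (kact w a); rewrite actka.
- by move=> b x [a ->]; exists (kmul b a); rewrite actkm.
- move=> h; case: nz; apply: ann_zero => a; apply: h; by exists a.
- by [].
Qed.

End Rep.
From Stdlib Require Import Classical.

Lemma step_exists (P : nat -> Prop) m : P 0%N -> ~ P m -> exists j, (j < m)%N /\ P j /\ ~ P j.+1.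
Proof.
elim: m => [|m IH] P0 nPm; first by [].
case: (classic (P m)) => Pm.
  by exists m; split => //; split.
have [j [jm [Pj nPj]]] := IH P0 Pm.
by exists j; split => //; apply: ltnW.
Qed.

Section FactK.
Variable k : comAlgType CC.
Variable A : kraw k.
Hypothesis HA : is_kalg A.
Hypothesis FT : finite_type A.
Variables (V1 : zmodType) (vs1 : CC -> V1 -> V1) (act1 : car A -> V1 -> V1) (kv1 : k -> V1 -> V1).
Hypothesis H1 : is_irred_rep (@full_set (car A)) (@zero_set (car A)) vs1 act1 kv1.
Variables (V2 : zmodType) (vs2 : CC -> V2 -> V2) (act2 : car A -> V2 -> V2) (kv2 : k -> V2 -> V2).
Hypothesis H2 : is_irred_rep (@full_set (car A)) (@zero_set (car A)) vs2 act2 kv2.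

Lemma factK :
  (forall a, (forall v, act1 a v = 0) -> forall v, act2 a v = 0) ->
  forall q, (forall v, act2 q v = 0) -> forall v, act1 q v = 0.
Proof.
move=> sub12 q hq.
case: FT => m [s hs].
have [a0 [v0 a0v0]] := nontriv H1.
have v0nz : v0 <> 0 by move=> e; apply: a0v0; rewrite e (act0r H1).
have cyc := cyclic H1 v0nz.
have [a2 [y0 a2y0]] := nontriv H2.
pose x (i : 'I_m) := act1 (s i) v0.
pose L j b := forall i : 'I_m, (j <= i)%N -> act1 b (x i) = 0.
pose g b := act2 b y0.
have L0 : forall b, L 0%N b -> forall v, act1 b v = 0.
  move=> b Lb v; have [c ->] := cyc v.
  have [w ->] := hs c.
  rewrite -(actkm H1) (km_sumr HA) (act_suml H1).
  apply: big1 => i _.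
  by rewrite -(kakmr HA) (actka H1) (actkm H1) Lb // (kv0 H1).
pose Z j := forall b, L j b -> g b = 0.
have Z0 : Z 0%N by move=> b Lb; apply: sub12; apply: L0.
have nZm : ~ Z m.
  by move=> h; apply: a2y0; apply: h => i; rewrite leqNgt ltn_ord.
have [j [jm [Zj nZj]]] := step_exists Z0 nZm.
pose jo := Ordinal jm.
pose xj := x jo.
have Lstep : forall b, L j.+1 b -> act1 b xj = 0 -> L j b.
  move=> b Lb hb i; rewrite leq_eqVlt; case/orP => [/eqP ji|]; last exact: Lb.
  by have -> : i = jo by apply: val_inj.
have LD : forall b c, L j.+1 b -> L j.+1 c -> L j.+1 (b + c).
  by move=> b c Lb Lc i hi; rewrite (actDl H1) Lb // Lc // addr0.
have LN : forall b, L j.+1 b -> L j.+1 (- b).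
  by move=> b Lb i hi; rewrite (actNl H1) Lb // oppr0.
have Lcs : forall l b, L j.+1 b -> L j.+1 (cscale l b).
  by move=> l b Lb i hi; rewrite (actcs H1) Lb // (vs0 H1).
have Lka : forall w b, L j.+1 b -> L j.+1 (kact w b).
  by move=> w b Lb i hi; rewrite (actka H1) Lb // (kv0 H1).
have Lkm : forall c b, L j.+1 b -> L j.+1 (kmul c b).
  by move=> c b Lb i hi; rewrite (actkm H1) Lb // (act0r H1).
have L_0 : L j.+1 0 by move=> i hi; rewrite (act0l H1).
have Hg : forall b b', L j.+1 b -> L j.+1 b' -> act1 b xj = act1 b' xj -> g b = g b'.
  move=> b b' Lb Lb' e.
  have : g (b - b') = 0.
    apply: Zj; apply: Lstep; first by apply: LD => //; apply: LN.
    by rewrite (actBl H1) e subrr.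
  by rewrite /g (actBl H2) => /eqP; rewrite subr_eq0 => /eqP.
have gD : forall b c, g (b + c) = g b + g c by move=> b c; apply: (actDl H2).
have gcs : forall l b, g (cscale l b) = vs2 l (g b) by move=> l b; apply: (actcs H2).
have gka : forall w b, g (kact w b) = kv2 w (g b) by move=> w b; apply: (actka H2).
have gkm : forall c b, g (kmul c b) = act2 c (g b) by move=> c b; apply: (actkm H2).
have [bb [Lbb gbb]] : exists b, L j.+1 b /\ g b <> 0.
  apply: NNPP => hn; apply: nZj => b Lb; apply: NNPP => gb.
  by apply: hn; exists b.
have S : forall v, exists b, L j.+1 b /\ v = act1 b xj.
  have := @irr _ _ _ _ _ _ H1 (fun v => exists b, L j.+1 b /\ v = act1 b xj).
  case.
  - by exists 0; split => //; rewrite (act0l H1).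
  - move=> v u [b [Lb ->]] [c [Lc ->]]; exists (b + c); split; first exact: LD.
    by rewrite (actDl H1).
  - move=> l v [b [Lb ->]]; exists (cscale l b); split; first exact: Lcs.
    by rewrite (actcs H1).
  - move=> w v [b [Lb ->]]; exists (kact w b); split; first exact: Lka.
    by rewrite (actka H1).
  - move=> c v [b [Lb ->]]; exists (kmul c b); split; first exact: Lkm.
    by rewrite (actkm H1).
  - move=> h; exfalso; apply: gbb; apply: Zj; apply: Lstep => //.
    by apply: h; exists bb.
  - by [].
pose T v := forall b, L j.+1 b -> act1 b xj = v -> g b = 0.
have Tz : forall v, T v -> v = 0.
  have := @irr _ _ _ _ _ _ H1 T.
  case.
  - by move=> b Lb hb; apply: Zj; apply: Lstep.
  - move=> v u Tv Tu b Lb e.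
    have [b1 [Lb1 e1]] := S v; have [b2 [Lb2 e2]] := S u.
    rewrite (Hg b (b1 + b2)) //; last by rewrite (actDl H1) e -e1 -e2.
      by rewrite gD (Tv b1) // (Tu b2) // addr0.
    exact: LD.
  - move=> l v Tv b Lb e.
    have [b1 [Lb1 e1]] := S v.
    rewrite (Hg b (cscale l b1)) //; last by rewrite (actcs H1) e e1.
      by rewrite gcs (Tv b1) // (vs0 H2).
    exact: Lcs.
  - move=> w v Tv b Lb e.
    have [b1 [Lb1 e1]] := S v.
    rewrite (Hg b (kact w b1)) //; last by rewrite (actka H1) e e1.
      by rewrite gka (Tv b1) // (kv0 H2).
    exact: Lka.
  - move=> c v Tv b Lb e.
    have [b1 [Lb1 e1]] := S v.
    rewrite (Hg b (kmul c b1)) //; last by rewrite (actkm H1) e e1.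
      by rewrite gkm (Tv b1) // (act0r H2).
    exact: Lkm.
  - by [].
  - move=> h; exfalso; apply: gbb; exact: (h (act1 bb xj) bb Lbb).
move=> v; have [b [Lb ->]] := S v.
apply: Tz => b'' Lb'' e.
rewrite (Hg b'' (kmul q b)) //; last by rewrite (actkm H1).
  by rewrite gkm hq.
exact: Lkm.
Qed.

End FactK.
Lemma sum1 (T : finType) (W : zmodType) (p : T) (F : T -> W) :
  \sum_i (if i == p then F i else 0) = F p.
Proof. by rewrite -big_mkcond big_pred1_eq. Qed.
Lemma sum1' (T : finType) (W : zmodType) (p : T) (F : T -> W) :
  \sum_i (if p == i then F i else 0) = F p.
Proof. by rewrite -(sum1 p F); apply: eq_bigr => i _; rewrite eq_sym. Qed.

Section Mat.
Variable k : comAlgType CC.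
Variable A : kraw k.
Hypothesis HA : is_kalg A.
Variable n : nat.

Notation B := (Mn A n).
Notation mm := (@kmul k B).
Notation km := (@kmul k A).

Definition E (i j : 'I_n) (a : car A) : 'M[car A]_n :=
  \matrix_(p, q) (if (p == i) && (q == j) then a else 0).

Lemma EE i j a p q : E i j a p q = if (p == i) && (q == j) then a else 0.
Proof. by rewrite mxE. Qed.

Lemma mmE (M N : 'M[car A]_n) i j : mm M N i j = \sum_l km (M i l) (N l j).
Proof. by rewrite /= mxE. Qed.

Lemma csE l (M : 'M[car A]_n) i j : @cscale k B l M i j = cscale l (M i j).
Proof. by rewrite /= mxE. Qed.
Lemma kaE w (M : 'M[car A]_n) i j : @kact k B w M i j = kact w (M i j).
Proof. by rewrite /= mxE. Qed.

Lemma Mn_kalg : is_kalg B.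
Proof.
split; first by move=> M; apply/matrixP => i j; rewrite /= !mxE (cs1 HA).
split; first by move=> l m M; apply/matrixP => i j; rewrite /= !mxE (csM HA).
split; first by move=> l m M; apply/matrixP => i j; rewrite /= !mxE (csDl HA).
split; first by move=> l M N; apply/matrixP => i j; rewrite /= !mxE (csDr HA).
split.
  move=> M N P; apply/matrixP => i j; rewrite !mmE.
  under eq_bigr do rewrite mmE (km_suml HA).
  rewrite exchange_big /=; apply: eq_bigr => l _.
  by rewrite mmE (km_sumr HA); apply: eq_bigr => p _; rewrite (kmA HA).
split.
  move=> M N P; apply/matrixP => i j; rewrite /= !mxE -big_split /=.
  by apply: eq_bigr => l _; rewrite mxE (kmDl HA).
split.
  move=> M N P; apply/matrixP => i j; rewrite /= !mxE -big_split /=.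
  by apply: eq_bigr => l _; rewrite mxE (kmDr HA).
split.
  move=> l M N; apply/matrixP => i j; rewrite mmE /= !mxE (cs_sum HA).
  by apply: eq_bigr => p _; rewrite mxE (kmZl HA).
split.
  move=> l M N; apply/matrixP => i j; rewrite mmE /= !mxE (cs_sum HA).
  by apply: eq_bigr => p _; rewrite mxE (kmZr HA).
split; first by move=> M; apply/matrixP => i j; rewrite /= !mxE (ka1 HA).
split; first by move=> w1 w2 M; apply/matrixP => i j; rewrite /= !mxE (kaM HA).
split; first by move=> w1 w2 M; apply/matrixP => i j; rewrite /= !mxE (kaDl HA).
split; first by move=> w M N; apply/matrixP => i j; rewrite /= !mxE (kaDr HA).
split.
  move=> l w M; split; apply/matrixP => i j; rewrite /= !mxE.
    exact: (cska HA).
  exact: (kacs HA).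
move=> w M N; split; apply/matrixP => i j; rewrite /= !mxE ?(ka_sum HA);
  apply: eq_bigr => p _; rewrite !mxE.
  exact: (kakml HA).
by rewrite -(kakml HA) (kakmr HA).
Qed.

End Mat.
Section MatFT.
Variable k : comAlgType CC.
Variable A : kraw k.
Hypothesis HA : is_kalg A.
Variable n : nat.
Notation B := (Mn A n).

Lemma Mn_ft : finite_type A -> finite_type B.
Proof.
case=> m [s hs].
pose T := prod (prod (ordinal n) (ordinal n)) (ordinal m).
pose F (x : T) : 'M[car A]_n := E x.1.1 x.1.2 (s x.2).
exists #|{: T}|, (fun t => F (enum_val t)) => M.
have [W hW] := fin_all_exists (fun (p : prod (ordinal n) (ordinal n)) => hs (M p.1 p.2)).
exists (fun t => W (enum_val t).1 (enum_val t).2).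
rewrite -(big_enum_val (fun x : T => @kact k B (W x.1 x.2) (F x))).
apply/matrixP => p q; rewrite summxE.
rewrite (eq_bigl (fun _ => true)) //.
pose G (ij : prod (ordinal n) (ordinal n)) (l : ordinal m) :=
  @kact k B (W ij l) (F (ij, l)) p q.
rewrite (eq_bigr (fun x : T => G x.1 x.2)); last by case.
rewrite -pair_bigA.
pose H (i j : ordinal n) := \sum_l G (i, j) l.
rewrite (eq_bigr (fun x => H x.1 x.2)); last by case.
rewrite -pair_bigA /H /G /=.
rewrite (eq_bigr (fun i => if i == p then
      \sum_j \sum_l @kact k B (W (i, j) l) (F (i, j, l)) p q else 0)); last first.
  move=> i _; case: eqP => // ip; apply: big1 => j _; apply: big1 => l _.
  rewrite /= !mxE /=; have -> : (p == i) = false by apply/eqP => e; apply: ip.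
  by rewrite /= (ka0 HA).
rewrite sum1.
rewrite (eq_bigr (fun j => if j == q then
      \sum_l @kact k B (W (p, j) l) (F (p, j, l)) p q else 0)); last first.
  move=> j _; case: eqP => // jq; apply: big1 => l _.
  rewrite /= !mxE /= eqxx /=; have -> : (q == j) = false by apply/eqP => e; apply: jq.
  by rewrite /= (ka0 HA).
rewrite sum1 (hW (p, q)) /=; apply: eq_bigr => l _.
by rewrite /= !mxE !eqxx.
Qed.

End MatFT.
Section Mat2.
Variable k : comAlgType CC.
Variable A : kraw k.
Hypothesis HA : is_kalg A.
Variable n : nat.
Notation B := (Mn A n).
Notation mm := (@kmul k B).
Notation km := (@kmul k A).

Lemma E_add (i j : 'I_n) (a b : car A) : E i j (a + b) = E i j a + E i j b.
Proof. by apply/matrixP => p q; rewrite !mxE; case: andP => //; rewrite addr0. Qed.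
Lemma E_0 (i j : 'I_n) : E i j 0 = 0 :> 'M[car A]_n.
Proof. by apply/matrixP => p q; rewrite !mxE; case: andP. Qed.
Lemma E_cs (i j : 'I_n) l (a : car A) : E i j (cscale l a) = @cscale k B l (E i j a).
Proof. by apply/matrixP => p q; rewrite /= !mxE; case: andP => // _; rewrite (cs0 HA). Qed.
Lemma E_ka (i j : 'I_n) w (a : car A) : E i j (kact w a) = @kact k B w (E i j a).
Proof. by apply/matrixP => p q; rewrite /= !mxE; case: andP => // _; rewrite (ka0 HA). Qed.

Lemma EM (i j : 'I_n) (a : car A) (M : 'M[car A]_n) : mm (E i j a) M = \sum_l E i l (km a (M j l)).
Proof.
apply/matrixP => p q; rewrite mmE summxE.
under eq_bigr do rewrite mxE.
under [RHS]eq_bigr do rewrite mxE.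
rewrite (bigD1 j) //= eqxx andbT big1 ?addr0; last first.
  by move=> l lj; rewrite (negbTE lj) andbF (km0l HA).
rewrite (bigD1 q) //= eqxx andbT big1 ?addr0; last first.
  by move=> l lq; rewrite [q == l]eq_sym (negbTE lq) andbF.
by case: (p == i); rewrite ?(km0l HA).
Qed.

Lemma ME (i j : 'I_n) (b : car A) (M : 'M[car A]_n) : mm M (E i j b) = \sum_p E p j (km (M p i) b).
Proof.
apply/matrixP => p q; rewrite mmE summxE.
under eq_bigr do rewrite mxE.
under [RHS]eq_bigr do rewrite mxE.
rewrite (bigD1 i) //= eqxx big1 ?addr0; last first.
  by move=> l li; rewrite (negbTE li) /= (km0r HA).
rewrite (bigD1 p) //= eqxx big1 ?addr0; last first.
  by move=> l lp; rewrite [p == l]eq_sym (negbTE lp).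
by case: (q == j); rewrite ?(km0r HA).
Qed.

Lemma E_mul (i j p q : 'I_n) (a b : car A) : mm (E i j a) (E p q b) = if j == p then E i q (km a b) else 0.
Proof.
rewrite EM (eq_bigr (fun l => if l == q then E i q (if j == p then km a b else 0) else 0)).
  by rewrite sum1; case: (j == p) => //; rewrite E_0.
move=> l _; rewrite mxE; case: (l =P q) => [->|/eqP lq].
  by rewrite andbT; case: (j == p) => //; rewrite (km0r HA).
by rewrite andbF (km0r HA) E_0.
Qed.

Lemma decomp (M : 'M[car A]_n) : M = \sum_i \sum_j E i j (M i j).
Proof.
apply/matrixP => p q; rewrite summxE.
rewrite (eq_bigr (fun i => if i == p then M p q else 0)) ?sum1 // => i _.
rewrite summxE (eq_bigr (fun j => if j == q then (if i == p then M p q else 0) else 0)).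
  by rewrite sum1.
move=> j _; rewrite mxE.
case: (i =P p) => [->|/eqP ip]; case: (j =P q) => [->|/eqP jq] //=; rewrite ?eqxx //.
- by rewrite eq_sym (negbTE jq) andbF.
- by rewrite eq_sym (negbTE ip).
- by rewrite eq_sym (negbTE ip).
Qed.

Lemma EME (i j : 'I_n) (a b : car A) (M : 'M[car A]_n) (o : 'I_n) :
  mm (mm (E o i a) M) (E j o b) = E o o (km (km a (M i j)) b).
Proof.
rewrite EM.
rewrite (km_suml (Mn_kalg HA n)).
rewrite (eq_bigr (fun l => if l == j then E o o (km (km a (M i j)) b) else 0)) ?sum1 //.
move=> l _; rewrite E_mul; case: (l =P j) => [->|/eqP lj]; rewrite ?eqxx //.
Qed.

Definition row0 (o : 'I_n) (M : 'M[car A]_n) : 'M[car A]_n :=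
  \matrix_(p, q) (if p == o then M p q else 0).

Definition frow (o : 'I_n) (N : 'M[car A]_n) := forall i l, i != o -> N i l = 0.

Lemma row0_frow (o : 'I_n) (M : 'M[car A]_n) : frow o (row0 o M).
Proof. by move=> i l io; rewrite mxE (negbTE io). Qed.

Lemma E_row0 (o : 'I_n) (a : car A) (M : 'M[car A]_n) : mm (E o o a) M = mm (E o o a) (row0 o M).
Proof. by rewrite !EM; apply: eq_bigr => l _; rewrite mxE eqxx. Qed.

Lemma frow_EM (o i : 'I_n) (a : car A) (M : 'M[car A]_n) : frow o (mm (E o i a) M).
Proof.
move=> p l po; rewrite EM summxE; apply: big1 => q _.
by rewrite mxE (negbTE po).
Qed.

Lemma frow_E (i o : 'I_n) (a : car A) (N : 'M[car A]_n) : frow o N -> i != o -> mm (E o i a) N = 0.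
Proof.
move=> fN io; rewrite EM; apply: big1 => l _.
by rewrite fN // (km0r HA) E_0.
Qed.

Lemma frow_decomp (o : 'I_n) (N : 'M[car A]_n) : frow o N -> N = \sum_l E o l (N o l).
Proof.
move=> fN; rewrite {1}(decomp N) (bigD1 o) //= [X in _ + X]big1 ?addr0 // => i io.
by apply: big1 => j _; rewrite fN // E_0.
Qed.

End Mat2.
From Stdlib Require Import ProofIrrelevance.
From mathcomp Require boolp.

Record subsp (V : zmodType) := Subsp {
  sp :> V -> Prop;
  sp0 : sp 0;
  spD : forall x y, sp x -> sp y -> sp (x + y);
  spN : forall x, sp x -> sp (- x) }.
Definition subT (V : zmodType) (S : subsp V) := {x : V | S x}.
HB.instance Definition _ (V : zmodType) (S : subsp V) := boolp.gen_eqMixin (subT S).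
HB.instance Definition _ (V : zmodType) (S : subsp V) := boolp.gen_choiceMixin (subT S).

Section SubT.
Variables (V : zmodType) (S : subsp V).
Definition sval_ (x : subT S) : V := proj1_sig x.
Lemma sval_inj (x y : subT S) : sval_ x = sval_ y -> x = y.
Proof.
case: x => x hx; case: y => y hy /= e; move: hy; rewrite -e => hy.
by rewrite (proof_irrelevance _ hx hy).
Qed.
Definition szero : subT S := exist _ 0 (sp0 S).
Definition sadd (x y : subT S) : subT S :=
  exist _ (sval_ x + sval_ y) (spD (proj2_sig x) (proj2_sig y)).
Definition sopp (x : subT S) : subT S := exist _ (- sval_ x) (spN (proj2_sig x)).
Lemma saddA : associative sadd.
Proof. by move=> x y z; apply: sval_inj; rewrite /= addrA. Qed.
Lemma saddC : commutative sadd.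
Proof. by move=> x y; apply: sval_inj; rewrite /= addrC. Qed.
Lemma sadd0 : left_id szero sadd.
Proof. by move=> x; apply: sval_inj; rewrite /= add0r. Qed.
Lemma saddN : left_inverse szero sopp sadd.
Proof. by move=> x; apply: sval_inj; rewrite /= addNr. Qed.
End SubT.

HB.instance Definition _ (V : zmodType) (S : subsp V) :=
  GRing.isZmodule.Build (subT S) (@saddA V S) (@saddC V S) (@sadd0 V S) (@saddN V S).

Lemma sval0 (V : zmodType) (S : subsp V) : sval_ (0 : subT S) = 0.
Proof. by []. Qed.
Lemma svalD (V : zmodType) (S : subsp V) (x y : subT S) : sval_ (x + y) = sval_ x + sval_ y.
Proof. by []. Qed.
Lemma sval_sum (V : zmodType) (S : subsp V) I r P (F : I -> subT S) :
  sval_ (\sum_(i <- r | P i) F i) = \sum_(i <- r | P i) sval_ (F i).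
Proof. exact: (sum_morph (@svalD V S)). Qed.
Section BRep.
Variable k : comAlgType CC.
Variable A : kraw k.
Hypothesis HA : is_kalg A.
Variable n' : nat.
Notation n := n'.+1.
Notation B := (Mn A n).
Notation mm := (@kmul k B).
Notation km := (@kmul k A).
Notation o := (@ord0 n').
Variables (V : zmodType) (vs : CC -> V -> V) (act : 'M[car A]_n -> V -> V) (kv : k -> V -> V).
Hypothesis Hr : is_irred_rep (@full_set (car B)) (@zero_set (car B)) vs act kv.

Lemma act_decomp M v : act M v = \sum_i \sum_j act (E i j (M i j)) v.
Proof.
rewrite {1}(decomp M) (act_suml Hr); apply: eq_bigr => i _.
by rewrite (act_suml Hr).
Qed.

Lemma allE_zero : (forall i j c v, act (E i j c) v = 0) -> forall M v, act M v = 0.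
Proof.
move=> h M v; rewrite act_decomp; apply: big1 => i _; apply: big1 => j _; exact: h.
Qed.

Lemma notallE : ~ (forall i j c v, act (E i j c) v = 0).
Proof. by move=> h; have [M [v]] := nontriv Hr; rewrite (allE_zero h). Qed.

Lemma Eo_split (r q : 'I_n) (d c : car A) : E r q (km d c) = mm (E r o d) (E o q c).
Proof. by rewrite (E_mul HA) eqxx. Qed.

Lemma Zrow x : (forall i a, act (E o i a) x = 0) -> x = 0.
Proof.
move=> hx.
have := @irr _ _ _ _ _ _ Hr (fun x => forall i a, act (E o i a) x = 0).
case.
- by move=> i a; rewrite (act0r Hr).
- by move=> v u hv hu i a; rewrite (actDr Hr) hv hu addr0.
- by move=> l v hv i a; rewrite (actvs Hr) hv (vs0 Hr).
- by move=> w v hv i a; rewrite (actkv Hr) hv (kv0 Hr).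
- move=> M v hv i a; rewrite -(actkm Hr) (EM HA) (act_suml Hr).
  by apply: big1 => l _; exact: hv.
- by move=> h; apply: h.
- move=> hall; exfalso; apply: notallE => p q c v.
  apply: (ann_zero Hr) => M; rewrite act_decomp; apply: big1 => r _; apply: big1 => s _.
  rewrite -(actkm Hr) (E_mul HA); case: (s == p); last by rewrite (act0l Hr).
  by rewrite Eo_split (actkm Hr) hall (act0r Hr).
Qed.

Lemma v0_exists : exists v0 : V, v0 <> 0.
Proof.
have [M [v hv]] := nontriv Hr; exists v; move=> e; apply: hv; by rewrite e (act0r Hr).
Qed.

Lemma kill_factor M :
  (forall j b w, act M (act (E j o b) w) = 0) -> forall v, act M v = 0.
Proof.
move=> h v.
have [w0 w0nz] := v0_exists.
have [K ->] := cyclic Hr w0nz v.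
have [K' e'] := cyclic Hr w0nz w0.
rewrite e'.
have -> : act K (act K' w0) = \sum_p \sum_q \sum_l act (E p o (K p l)) (act (E o q (K' l q)) w0).
  rewrite -(actkm Hr) act_decomp; apply: eq_bigr => p _; apply: eq_bigr => q _.
  rewrite mmE (sum_morph (@E_add k A n p q)) (act_suml Hr); apply: eq_bigr => l _.
  by rewrite Eo_split (actkm Hr).
rewrite (act_sumr Hr); apply: big1 => p _; rewrite (act_sumr Hr); apply: big1 => q _.
by rewrite (act_sumr Hr); apply: big1 => l _; exact: h.
Qed.

Lemma Pchar M : (forall v, act M v = 0) <->
  (forall i j a b v, act (E o o (km (km a (M i j)) b)) v = 0).
Proof.
split.
  by move=> h i j a b v; rewrite -(EME HA) !(actkm Hr) h (act0r Hr).
move=> h; apply: kill_factor => j b w; apply: Zrow => i a.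
by rewrite -(actkm Hr) -(actkm Hr) (EME HA) h.
Qed.

Section W.
Variable v0 : V.
Hypothesis v0nz : v0 <> 0.

Definition Wp (x : V) := exists N, frow o N /\ x = act N v0.
Lemma Wp0 : Wp 0.
Proof. by exists 0; split; [move=> i l _; rewrite mxE | rewrite (act0l Hr)]. Qed.
Lemma WpD x y : Wp x -> Wp y -> Wp (x + y).
Proof.
move=> [N [fN ->]] [N' [fN' ->]]; exists (N + N'); split; last by rewrite (actDl Hr).
by move=> i l io; rewrite mxE fN // fN' // addr0.
Qed.
Lemma WpN x : Wp x -> Wp (- x).
Proof.
move=> [N [fN ->]]; exists (- N); split; last by rewrite (actNl Hr).
by move=> i l io; rewrite mxE fN // oppr0.
Qed.
Definition WS : subsp V := @Subsp V Wp Wp0 WpD WpN.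
Notation Wt := (subT WS).

Lemma Wp_vs l x : Wp x -> Wp (vs l x).
Proof.
move=> [N [fN ->]]; exists (@cscale k B l N); split; last by rewrite (actcs Hr).
by move=> i j io; rewrite /= mxE fN // (cs0 HA).
Qed.
Lemma Wp_kv w x : Wp x -> Wp (kv w x).
Proof.
move=> [N [fN ->]]; exists (@kact k B w N); split; last by rewrite (actka Hr).
by move=> i j io; rewrite /= mxE fN // (ka0 HA).
Qed.
Lemma Wp_act a x : Wp x -> Wp (act (E o o a) x).
Proof.
move=> [N [fN ->]]; exists (mm (E o o a) N); split; last by rewrite (actkm Hr).
exact: (frow_EM HA).
Qed.
Lemma W_E i b v : Wp (act (E o i b) v).
Proof.
have [K ->] := cyclic Hr v0nz v.
exists (mm (E o i b) K); split; last by rewrite (actkm Hr).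
exact: (frow_EM HA).
Qed.

Definition vsW l (x : Wt) : Wt := exist _ (vs l (sval_ x)) (Wp_vs l (proj2_sig x)).
Definition kvW w (x : Wt) : Wt := exist _ (kv w (sval_ x)) (Wp_kv w (proj2_sig x)).
Definition actW a (x : Wt) : Wt := exist _ (act (E o o a) (sval_ x)) (Wp_act a (proj2_sig x)).
Definition inW i b v : Wt := exist _ (act (E o i b) v) (W_E i b v).

Lemma W_isrep : is_rep (@full_set (car A)) (@zero_set (car A)) vsW actW kvW.
Proof.
split; first by move=> x; apply: sval_inj; rewrite /= (vs1 Hr).
split; first by move=> l m x; apply: sval_inj; rewrite /= (vsM Hr).
split; first by move=> l m x; apply: sval_inj; rewrite /= (vsDl Hr).
split; first by move=> l x y; apply: sval_inj; rewrite /= (vsDr Hr).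
split; first by move=> x; apply: sval_inj; rewrite /= (kv1 Hr).
split; first by move=> w1 w2 x; apply: sval_inj; rewrite /= (kvM Hr).
split; first by move=> w1 w2 x; apply: sval_inj; rewrite /= (kvDl Hr).
split; first by move=> w x y; apply: sval_inj; rewrite /= (kvDr Hr).
split.
  move=> l w x; split; apply: sval_inj; rewrite /=; first exact: (vskv Hr).
  exact: (kvvs Hr).
split; first by move=> a b x _ _; apply: sval_inj; rewrite /= E_add (actDl Hr).
split; first by move=> a x y _; apply: sval_inj; rewrite /= (actDr Hr).
split; first by move=> l a x _; apply: sval_inj; rewrite /= (E_cs HA) (actcs Hr).
split; first by move=> l a x _; apply: sval_inj; rewrite /= (actvs Hr).
split; first by move=> a b x _ _; apply: sval_inj; rewrite /= Eo_split (actkm Hr).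
split.
  move=> w a x _; split; apply: sval_inj; rewrite /=; first by rewrite (E_ka HA) (actka Hr).
  by rewrite (actkv Hr).
by move=> a x ->; apply: sval_inj; rewrite /= E_0 (act0l Hr).
Qed.

Lemma W_nontriv : exists a (x : Wt), actW a x <> 0.
Proof.
apply: NNPP => hn.
have h0 : forall a (x : Wt), act (E o o a) (sval_ x) = 0.
  move=> a x; apply: NNPP => ne; apply: hn; exists a, x => e; apply: ne.
  by have := congr1 (@sval_ _ _) e.
have hv : forall i b, act (E o i b) v0 = 0.
  move=> i b; apply: Zrow => j c.
  case: (j =P o) => [->|/eqP jo]; first exact: (h0 c (inW i b v0)).
  by rewrite -(actkm Hr) (E_mul HA) (negbTE jo) (act0l Hr).
by apply: v0nz; apply: Zrow.
Qed.

Lemma Usum (U : Wt -> Prop) : U 0 -> (forall v u, U v -> U u -> U (v + u)) ->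
  forall I r (P : pred I) (F : I -> Wt), (forall i, P i -> U (F i)) ->
  U (\sum_(i <- r | P i) F i).
Proof. by move=> U0 UD I r P F h; apply: big_ind. Qed.

Lemma W_irr (U : Wt -> Prop) : U 0 -> (forall v u, U v -> U u -> U (v + u)) ->
  (forall l v, U v -> U (vsW l v)) -> (forall w v, U v -> U (kvW w v)) ->
  (forall a v, full_set a -> U v -> U (actW a v)) ->
  (forall v, U v -> v = 0) \/ (forall v, U v).
Proof.
move=> U0 UD Us Uk Ua.
have := @irr _ _ _ _ _ _ Hr (fun v => forall i b, U (inW i b v)).
case.
- move=> i b; suff -> : inW i b 0 = 0 by [].
  by apply: sval_inj; rewrite /= (act0r Hr).
- move=> v u hv hu i b.
  suff -> : inW i b (v + u) = inW i b v + inW i b u by apply: UD.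
  by apply: sval_inj; rewrite /= (actDr Hr).
- move=> l v hv i b.
  suff -> : inW i b (vs l v) = vsW l (inW i b v) by apply: Us.
  by apply: sval_inj; rewrite /= (actvs Hr).
- move=> w v hv i b.
  suff -> : inW i b (kv w v) = kvW w (inW i b v) by apply: Uk.
  by apply: sval_inj; rewrite /= (actkv Hr).
- move=> M v hv i b.
  suff -> : inW i b (act M v) = \sum_l inW l (km b (M i l)) v.
    by apply: Usum => // l _; apply: hv.
  apply: sval_inj; rewrite sval_sum /= -(actkm Hr) (EM HA) (act_suml Hr).
  done.
- move=> h; left => x Ux.
  suff hx : sval_ x = 0 by apply: sval_inj; rewrite hx.
  apply: h => i b.
  case: (i =P o) => [->|/eqP io].
    suff -> : inW o b (sval_ x) = actW b x by apply: Ua.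
    by apply: sval_inj.
  suff -> : inW i b (sval_ x) = 0 by [].
  apply: sval_inj; rewrite /=.
  case: x {Ux} => y /= [N [fN ->]].
  by rewrite -(actkm Hr) (frow_E HA) // (act0l Hr).
- move=> h; right => x.
  case: x => y hy; have [N [fN ey]] := hy.
  have -> : exist _ y hy = \sum_l inW l (N o l) v0 :> Wt.
    apply: sval_inj; rewrite sval_sum /= ey {1}(frow_decomp fN) (act_suml Hr).
    done.
  by apply: Usum => // l _; apply: h.
Qed.

Lemma W_irred : is_irred_rep (@full_set (car A)) (@zero_set (car A)) vsW actW kvW.
Proof.
split; first exact: W_isrep.
split; last exact: W_irr.
by have [a [x hx]] := W_nontriv; exists a, x.
Qed.

Lemma W_ann a : (forall x : Wt, actW a x = 0) <-> (forall v, act (E o o a) v = 0).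
Proof.
split; last by move=> h x; apply: sval_inj; rewrite /= h.
move=> h v; have [M ->] := cyclic Hr v0nz v.
have hW : Wp (act (row0 o M) v0) by exists (row0 o M); split => //; exact: row0_frow.
rewrite -(actkm Hr) (E_row0 HA) (actkm Hr).
by have := congr1 (@sval_ _ _) (h (exist _ _ hW)).
Qed.

End W.

Lemma pre_prim : exists Q : car A -> Prop,
  prim_sq (@full_set (car A)) (@zero_set (car A)) Q /\
  forall a, Q a <-> (forall v, act (E o o a) v = 0).
Proof.
have [v0 v0nz] := v0_exists.
exists (fun a => full_set a /\ forall x : subT (WS v0), actW a x = 0).
split.
  exists (subT (WS v0)), (@vsW v0), (@actW v0), (@kvW v0); split => //.
  exact: (W_irred v0nz).
move=> a; split; first by case=> _ /(W_ann v0nz a).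
by move=> h; split => //; apply/(W_ann v0nz a).
Qed.

End BRep.
Section ARep.
Variable k : comAlgType CC.
Variable A : kraw k.
Hypothesis HA : is_kalg A.
Variable n' : nat.
Notation n := n'.+1.
Notation B := (Mn A n).
Notation mm := (@kmul k B).
Notation km := (@kmul k A).
Notation o := (@ord0 n').
Variables (U : zmodType) (vsU : CC -> U -> U) (actU : car A -> U -> U) (kvU : k -> U -> U).
Hypothesis Hu : is_irred_rep (@full_set (car A)) (@zero_set (car A)) vsU actU kvU.

Notation Vn := {ffun 'I_n -> U}.
Definition vsn l (x : Vn) : Vn := [ffun i => vsU l (x i)].
Definition kvn w (x : Vn) : Vn := [ffun i => kvU w (x i)].
Definition actn (M : 'M[car A]_n) (x : Vn) : Vn := [ffun i => \sum_j actU (M i j) (x j)].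
Definition ev (i : 'I_n) (y : U) : Vn := [ffun p => if p == i then y else 0].

Lemma vsU_sum I r P (F : I -> U) l :
  vsU l (\sum_(i <- r | P i) F i) = \sum_(i <- r | P i) vsU l (F i).
Proof. exact: (sum_morph (vsDr Hu l)). Qed.

Lemma Vn_isrep : is_rep (@full_set (car B)) (@zero_set (car B)) vsn actn kvn.
Proof.
split; first by move=> x; apply/ffunP => i; rewrite !ffunE (vs1 Hu).
split; first by move=> l m x; apply/ffunP => i; rewrite !ffunE (vsM Hu).
split; first by move=> l m x; apply/ffunP => i; rewrite !ffunE (vsDl Hu).
split; first by move=> l x y; apply/ffunP => i; rewrite !ffunE (vsDr Hu).
split; first by move=> x; apply/ffunP => i; rewrite !ffunE (kv1 Hu).
split; first by move=> w1 w2 x; apply/ffunP => i; rewrite !ffunE (kvM Hu).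
split; first by move=> w1 w2 x; apply/ffunP => i; rewrite !ffunE (kvDl Hu).
split; first by move=> w x y; apply/ffunP => i; rewrite !ffunE (kvDr Hu).
split.
  move=> l w x; split; apply/ffunP => i; rewrite !ffunE; first exact: (vskv Hu).
  exact: (kvvs Hu).
split.
  move=> M N x _ _; apply/ffunP => i; rewrite !ffunE -big_split /=.
  by apply: eq_bigr => j _; rewrite mxE (actDl Hu).
split.
  move=> M x y _; apply/ffunP => i; rewrite !ffunE -big_split /=.
  by apply: eq_bigr => j _; rewrite ffunE (actDr Hu).
split.
  move=> l M x _; apply/ffunP => i; rewrite !ffunE vsU_sum.
  by apply: eq_bigr => j _; rewrite /= mxE (actcs Hu).
split.
  move=> l M x _; apply/ffunP => i; rewrite !ffunE vsU_sum.
  by apply: eq_bigr => j _; rewrite ffunE (actvs Hu).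
split.
  move=> M N x _ _; apply/ffunP => i; rewrite !ffunE.
  under eq_bigr do rewrite mmE (act_suml Hu).
  rewrite exchange_big /=; apply: eq_bigr => l _.
  rewrite ffunE (act_sumr Hu); apply: eq_bigr => j _.
  by rewrite (actkm Hu).
split.
  move=> w M x _; split; apply/ffunP => i; rewrite !ffunE ?(kv_sum Hu);
    apply: eq_bigr => j _; rewrite ?ffunE.
    by rewrite /= mxE (actka Hu).
  by rewrite (actkv Hu).
move=> M x ->; apply/ffunP => i; rewrite !ffunE; apply: big1 => j _.
by rewrite mxE (act0l Hu).
Qed.

Lemma actnE i j a (x : Vn) : actn (E i j a) x = ev i (actU a (x j)).
Proof.
apply/ffunP => p; rewrite !ffunE.
under eq_bigr do rewrite mxE.
case pi: (p == i) => /=.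
  rewrite (bigD1 j) //= eqxx big1 ?addr0 // => q qj.
  by rewrite (negbTE qj) (act0l Hu).
by apply: big1 => q _; rewrite (act0l Hu).
Qed.

Lemma ev_decomp (x : Vn) : x = \sum_i ev i (x i).
Proof.
apply/ffunP => p; rewrite sum_ffunE.
under eq_bigr do rewrite ffunE.
by rewrite sum1'.
Qed.

Lemma Vn_irr (U' : Vn -> Prop) : U' 0 -> (forall v u, U' v -> U' u -> U' (v + u)) ->
  (forall l v, U' v -> U' (vsn l v)) -> (forall w v, U' v -> U' (kvn w v)) ->
  (forall a v, full_set a -> U' v -> U' (actn a v)) ->
  (forall v, U' v -> v = 0) \/ (forall v, U' v).
Proof.
move=> U0 UD Us Uk Ua.
case: (classic (exists u, U' u /\ u <> 0)) => [[u [Uu unz]]|hn]; last first.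
  left => v Uv; apply: NNPP => vnz; apply: hn; by exists v.
right.
have [j uj] : exists j, u j <> 0.
  apply: NNPP => h; apply: unz; apply/ffunP => p; rewrite ffunE.
  by apply: NNPP => hp; apply: h; exists p.
have he : forall i y, U' (ev i y).
  move=> i y; have [a ->] := cyclic Hu uj y.
  by rewrite -actnE; apply: Ua.
move=> x; rewrite (ev_decomp x); apply: big_ind => //.
Qed.

Lemma Vn_irred : is_irred_rep (@full_set (car B)) (@zero_set (car B)) vsn actn kvn.
Proof.
split; first exact: Vn_isrep.
split; last exact: Vn_irr.
have [a [y hy]] := nontriv Hu.
exists (E o o a), (ev o y); split => //.
rewrite actnE => e; apply: hy.
by have := congr1 (fun f : Vn => f o) e; rewrite !ffunE !eqxx.
Qed.

Lemma Vn_pre a : (forall x, actn (E o o a) x = 0) -> forall y, actU a y = 0.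
Proof.
move=> h y; have := congr1 (fun f : Vn => f o) (h (ev o y)).
by rewrite actnE !ffunE !eqxx.
Qed.

End ARep.
Section Final.
Variable k : comAlgType CC.
Variable A : kraw k.
Hypothesis HA : is_kalg A.
Hypothesis FT : finite_type A.
Variable n' : nat.
Notation n := n'.+1.
Notation B := (Mn A n).
Notation mm := (@kmul k B).
Notation km := (@kmul k A).
Notation o := (@ord0 n').
Notation fE := (fun a : car A => (E o o a : car B)).

Lemma primK (Q1 Q2 : car A -> Prop) :
  prim_sq (@full_set (car A)) (@zero_set (car A)) Q1 ->
  prim_sq (@full_set (car A)) (@zero_set (car A)) Q2 ->
  sub_set Q1 Q2 -> sub_set Q2 Q1.
Proof.
move=> [V1 [vs1 [act1 [kv1 [H1 e1]]]]] [V2 [vs2 [act2 [kv2 [H2 e2]]]]] sub q Q2q.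
apply/(e1 q); split => //.
apply: (factK HA FT H1 H2).
  move=> a h; have Q1a : Q1 a by apply/(e1 a).
  by have [_ h2] := (e2 a).1 (sub a Q1a).
by have [_ h2] := (e2 q).1 Q2q.
Qed.

Lemma fE_spec : spec_pres fE.
Proof.
rewrite /spec_pres /spec_pres_sq /=.
split.
  move=> P [V [vs [act [kv [Hr eP]]]]].
  have [Q [pQ eQ]] := pre_prim HA Hr.
  have preQ : forall a, P (E o o a) -> Q a.
    by move=> a /(eP _) [_ h]; apply/eQ.
  exists Q; split => //; split; first by move=> a [_ Pa]; apply: preQ.
  move=> Q' pQ' sub.
  have QQ' : sub_set Q Q'.
    move=> a Qa; apply: sub; split => //; apply/(eP _); split => //; exact/eQ.
  by move=> a; split; [apply: QQ' | apply: (primK pQ pQ' QQ')].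
split.
  move=> P1 P2 Q [V1 [vs1 [act1 [kv1 [H1 e1]]]]] [V2 [vs2 [act2 [kv2 [H2 e2]]]]] pQ s1 s2.
  have [Q1 [pQ1 eQ1]] := pre_prim HA H1.
  have [Q2 [pQ2 eQ2]] := pre_prim HA H2.
  have sQ1 : sub_set Q1 Q.
    by move=> a /eQ1 h; apply: s1; split => //; apply/(e1 _); split.
  have sQ2 : sub_set Q2 Q.
    by move=> a /eQ2 h; apply: s2; split => //; apply/(e2 _); split.
  have sQ1' := primK pQ1 pQ sQ1.
  have sQ2' := primK pQ2 pQ sQ2.
  have eqv : forall a, (forall v, act1 (E o o a) v = 0) <-> (forall v, act2 (E o o a) v = 0).
    move=> a; split.
      by move=> /eQ1 /sQ1 /sQ2' /eQ2.
    by move=> /eQ2 /sQ2 /sQ1' /eQ1.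
  move=> M; rewrite (e1 M) (e2 M).
  split; case=> _ h; split => //.
    apply/(Pchar HA H2) => i j a b; apply/eqv; move: i j a b; exact/(Pchar HA H1).
  apply/(Pchar HA H1) => i j a b; apply/eqv; move: i j a b; exact/(Pchar HA H2).
move=> Q [U [vsU [actU [kvU [Hu eQ]]]]].
exists (fun M => full_set M /\ forall x, actn actU M x = 0); split.
  exists {ffun 'I_n -> U}, (vsn vsU), (actn actU), (kvn kvU); split => //.
  exact: (Vn_irred n' Hu).
move=> a [_ [_ h]]; apply/(eQ a); split => //.
exact: (Vn_pre Hu h).
Qed.

End Final.
Lemma kideal_zero k (X : kraw k) : is_kalg X -> kideal (@zero_set (car X)).
Proof.
move=> HX; rewrite /kideal /zero_set.
split => //; split; first by move=> a b -> ->; rewrite addr0.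
split; first by move=> a ->; rewrite oppr0.
split; first by move=> l a ->; rewrite (cs0 HX).
split; first by move=> a b ->; rewrite (km0r HX).
split; first by move=> a b ->; rewrite (km0l HX).
by move=> w a ->; rewrite (ka0 HX).
Qed.

Lemma kideal_full k (X : kraw k) : kideal (@full_set (car X)).
Proof. by rewrite /kideal /full_set. Qed.

Section Final2.
Variable k : comAlgType CC.
Variable A : kraw k.
Hypothesis HA : is_kalg A.
Hypothesis FT : finite_type A.
Variable n' : nat.
Notation n := n'.+1.
Notation B := (Mn A n).
Notation o := (@ord0 n').
Notation fE := (fun a : car A => (E o o a : car B)).

Lemma fE_morph : kmorph fE.
Proof.
split; first by move=> a b; rewrite E_add.
split; first by move=> l a; rewrite (E_cs HA).
split; first by move=> a b; rewrite (E_mul HA) eqxx.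
by move=> w a; rewrite (E_ka HA).
Qed.

Lemma fE_filt : spec_pres_filt fE.
Proof.
exists 1%N, (fun j => if j == 0%N then @zero_set (car A) else @full_set (car A)),
  (fun j => if j == 0%N then @zero_set (car B) else @full_set (car B)).
split => //; split => //; split => //; split => //.
split.
  case=> [|[|j]] //= _; split; (apply: kideal_zero || apply: kideal_full) => //.
  exact: (Mn_kalg HA).
split.
  by case=> [|[|j]] //= _; split.
split.
  case=> [|[|j]] a //= _; rewrite /zero_set => ->.
  by rewrite E_0.
case=> [|[|j]] //= _.
exact: (fE_spec HA FT).
Qed.

End Final2.

Unset Implicit Arguments.

Theorem proposition8p5 (k : comAlgType CC) (Hk : coord_alg k)
    (A : kraw k) (HA : ft_kalg A) (n : nat) (Hn : (0 < n)%N) :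
  strat_eq A (Mn A n).
Proof.
case: n Hn => [//|n'] _.
case: HA => HA FT.
apply: (@se_spec k A (Mn A n'.+1) (fun a => E ord0 ord0 a)).
- by split.
- by split; [exact: Mn_kalg | exact: Mn_ft].
- exact: fE_morph.
- exact: fE_filt.
Qed.
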